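(* Let $P$ and $Q$ be posets, let $\mathcal U$ and $\mathcal D$ be a join- and a meet-specification of $P$, both of radius $\omega$, let $n\in\omega$, and let $\mathcal A_n$, $\mathcal U_n$, $\mathcal D_n$, $\gamma_{0n}:P\to\mathcal A_n$ be as in the construction described in the context. Let $f:P\to Q$ be a $(\mathcal U,\mathcal D)$-morphism, and suppose $Q$ is $(n+1)$-complete relative to $f[P]$. Then there is a unique $(\mathcal U_n,\mathcal D_n)$-morphism $f^*:\mathcal A_n\to Q$ such that $f^*\circ\gamma_{0n}=f$.
   Context: For a poset $Q$ and $q\in Q$, $q^\uparrow=\{q'\ge q\}$, $q^\downarrow=\{q'\le q\}$; $e^{-1}(Z)=\{p:e(p)\in Z\}$. A meet-extension is an order-embedding $e:P\to X$ with $x=\bigwedge e[e^{-1}(x^\uparrow)]$ for all $x\in X$; a join-extension dually. Completely meet-preserving: preserves all meets that exist in the domain; completely join-preserving dually. Canonical amalgamation of a meet-extension $e_X:P\to X$ and a join-extension $e_Y:P\to Y$: a triple $(A,\pi_X,\pi_Y)$, $A$ a poset, $\pi_X:X\to A$ a completely meet-preserving order-embedding, $\pi_Y:Y\to A$ a completely join-preserving order-embedding, $\pi_X\circ e_X=\pi_Y\circ e_Y$, and for every poset $Q'$ and order-preserving $f:X\to Q'$, $g:Y\to Q'$ with ($\pi_Y(y)\le\pi_X(x)\Rightarrow g(y)\le f(x)$), there is a unique order-preserving $u:A\to Q'$ with $u\circ\pi_X=f$, $u\circ\pi_Y=g$. A join-specification of $P$ is a set $\mathcal U$ of subsets of $P$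 each having a join in $P$, containing all singletons; meet-specification dually; radius $\omega$ means all members are finite. For a set $\mathcal U$ of subsets of a poset with existing joins, a $\mathcal U$-ideal is a downset closed under joins of members of $\mathcal U$ contained in it; $\mathcal D$-filters dually; finitely generated means smallest such containing some finite set. An order-preserving map is a $(\mathcal U,\mathcal D)$-morphism if it preserves joins of members of $\mathcal U$ and meets of members of $\mathcal D$. Construction: $\mathcal A_0=P$, $\mathcal U_0=\mathcal U$, $\mathcal D_0=\mathcal D$. Given $\mathcal A_n,\mathcal U_n,\mathcal D_n$: $X_n$ = non-empty finitely generated $\mathcal D_n$-filters of $\mathcal A_n$ ordered by reverse inclusion, $Y_n$ = non-empty finitely generated $\mathcal U_n$-ideals of $\mathcal A_n$ ordered by inclusion, $e_{X_n}(a)=a^\uparrow$, $e_{Y_n}(a)=a^\downarrow$; $(\mathcal A_{n+1},\pi_{X_n},\pi_{Y_n})$ a canonical amalgamation of $e_{X_n},e_{Y_n}$; $\gamma_n=\pi_{X_n}\circ e_{X_n}$; $\mathcal U_{n+1}=\mathcal D_{n+1}$ = non-empty finite subsets of $\gamma_n[\mathcal A_n]$; $\gamma_{mn}=\gamma_{n-1}\circ\dots\circ\gamma_m$ for $m<n$, $\gamma_{nn}=\mathrm{id}$. Terms: for $2\le k<\omega$ take $k$-ary symbols $\bigvee_k,\bigwedge_k$. For a set $T$, $T$-terms are elements of $T$ (complexity 0) and $\bigvee_k(\phi_1,\dots,\phi_k)$, $\bigwedge_k(\phi_1,\dots,\phi_k)$ for $T$-terms $\phi_i$ (complexity $1+\max$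 of complexities). For $T\subseteq Q$, $q\in Q$ corresponds to $t\in T$ iff $q=t$; to $\bigvee_k(\phi_1,\dots,\phi_k)$ iff each $\phi_i$ has a correspondent $q_i$ and $q=\bigvee\{q_1,\dots,q_k\}$ in $Q$; dually for $\bigwedge_k$. $Q$ is $k$-complete relative to $T$ if for all $k'<k$ every $T$-term of complexity $k'$ has a correspondent in $Q$. *)

(* Defs.v *)
From Stdlib Require Import List PeanoNat ProofIrrelevance
  FunctionalExtensionality PropExtensionality.
Set Implicit Arguments.

Record Poset := {
  carrier :> Type;
  le : carrier -> carrier -> Prop;
  le_refl : forall x, le x x;
  le_antisym : forall x y, le x y -> le y x -> x = y;
  le_trans : forall x y z, le x y -> le y z -> le x z }.

Arguments le {_} _ _.

Definition subset {T : Type} (A B : T -> Prop) : Prop := forall x, A x -> B x.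

Definition image {A B : Type} (f : A -> B) (S : A -> Prop) : B -> Prop :=
  fun y => exists x, S x /\ f x = y.
Definition preimage {A B : Type} (f : A -> B) (Z : B -> Prop) : A -> Prop :=
  fun x => Z (f x).

Definition up {Q : Poset} (q : Q) : Q -> Prop := fun q' => le q q'.
Definition down {Q : Poset} (q : Q) : Q -> Prop := fun q' => le q' q.

Definition is_lb {Q : Poset} (S : Q -> Prop) (x : Q) := forall y, S y -> le x y.
Definition is_ub {Q : Poset} (S : Q -> Prop) (x : Q) := forall y, S y -> le y x.
Definition is_meet {Q : Poset} (S : Q -> Prop) (m : Q) :=
  is_lb S m /\ forall x, is_lb S x -> le x m.
Definition is_join {Q : Poset} (S : Q -> Prop) (j : Q) :=
  is_ub S j /\ forall x, is_ub S x -> le j x.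

Definition order_preserving {A B : Poset} (f : A -> B) :=
  forall x y, le x y -> le (f x) (f y).
Definition order_embedding {A B : Poset} (f : A -> B) :=
  forall x y, le x y <-> le (f x) (f y).

Definition meet_extension {P X : Poset} (e : P -> X) :=
  order_embedding e /\ forall x : X, is_meet (image e (preimage e (up x))) x.
Definition join_extension {P Y : Poset} (e : P -> Y) :=
  order_embedding e /\ forall y : Y, is_join (image e (preimage e (down y))) y.

Definition completely_meet_preserving {A B : Poset} (f : A -> B) :=
  forall S m, is_meet S m -> is_meet (image f S) (f m).
Definition completely_join_preserving {A B : Poset} (f : A -> B) :=
  forall S j, is_join S j -> is_join (image f S) (f j).

Definition canonical_amalgamation {P X Y : Poset} (eX : P -> X) (eY : P -> Y)
    (A : Poset) (piX : X -> A) (piY : Y -> A) : Prop :=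
  completely_meet_preserving piX /\ order_embedding piX /\
  completely_join_preserving piY /\ order_embedding piY /\
  (forall p, piX (eX p) = piY (eY p)) /\
  forall (Q' : Poset) (f : X -> Q') (g : Y -> Q'),
    order_preserving f -> order_preserving g ->
    (forall x y, le (piY y) (piX x) -> le (g y) (f x)) ->
    exists u : A -> Q',
      (order_preserving u /\ (forall x, u (piX x) = f x) /\ (forall y, u (piY y) = g y)) /\
      forall u' : A -> Q', order_preserving u' ->
        (forall x, u' (piX x) = f x) -> (forall y, u' (piY y) = g y) ->
        forall a, u' a = u a.

Definition finite_set {T : Type} (S : T -> Prop) : Prop :=
  exists l : list T, forall x, S x <-> In x l.

Definition nonempty {T : Type} (S : T -> Prop) : Prop := exists x, S x.

Definition join_specification {P : Poset} (U : (P -> Prop) -> Prop) :=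
  (forall S, U S -> exists j, is_join S j) /\ (forall x : P, U (fun y => y = x)).
Definition meet_specification {P : Poset} (D : (P -> Prop) -> Prop) :=
  (forall S, D S -> exists m, is_meet S m) /\ (forall x : P, D (fun y => y = x)).

Definition radius_omega {P : Poset} (U : (P -> Prop) -> Prop) :=
  forall S, U S -> finite_set S.

Definition is_U_ideal {A : Poset} (U : (A -> Prop) -> Prop) (I : A -> Prop) :=
  (forall x y, le x y -> I y -> I x) /\
  (forall S, U S -> subset S I -> forall j, is_join S j -> I j).
Definition is_D_filter {A : Poset} (D : (A -> Prop) -> Prop) (F : A -> Prop) :=
  (forall x y, le x y -> F x -> F y) /\
  (forall S, D S -> subset S F -> forall m, is_meet S m -> F m).

Definition fg_U_ideal {A : Poset} (U : (A -> Prop) -> Prop) (I : A -> Prop) :=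
  exists G : A -> Prop, finite_set G /\ is_U_ideal U I /\ subset G I /\
    forall J, is_U_ideal U J -> subset G J -> subset I J.
Definition fg_D_filter {A : Poset} (D : (A -> Prop) -> Prop) (F : A -> Prop) :=
  exists G : A -> Prop, finite_set G /\ is_D_filter D F /\ subset G F /\
    forall J, is_D_filter D J -> subset G J -> subset F J.

Definition UD_morphism {A B : Poset} (U D : (A -> Prop) -> Prop) (f : A -> B) :=
  order_preserving f /\
  (forall S, U S -> forall j, is_join S j -> is_join (image f S) (f j)) /\
  (forall S, D S -> forall m, is_meet S m -> is_meet (image f S) (f m)).

Lemma sig_set_eq {T : Type} (Pr : (T -> Prop) -> Prop)
  (F G : {S : T -> Prop | Pr S}) :
  subset (proj1_sig F) (proj1_sig G) -> subset (proj1_sig G) (proj1_sig F) -> F = G.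
Proof.
  destruct F as [F hF], G as [G hG]; simpl; intros h1 h2.
  assert (F = G) as <-.
  { apply functional_extensionality; intro x.
    apply propositional_extensionality; split; auto. }
  f_equal; apply proof_irrelevance.
Qed.

Definition Xcar (A : Poset) (D : (A -> Prop) -> Prop) : Type :=
  {F : A -> Prop | nonempty F /\ fg_D_filter D F}.
Definition Ycar (A : Poset) (U : (A -> Prop) -> Prop) : Type :=
  {I : A -> Prop | nonempty I /\ fg_U_ideal U I}.

Definition Xposet {A : Poset} (D : (A -> Prop) -> Prop) : Poset.
Proof.
  refine (@Build_Poset (@Xcar A D)
            (fun F G => subset (proj1_sig G) (proj1_sig F)) _ _ _).
  - intros F x h; exact h.
  - intros F G h1 h2; apply sig_set_eq; assumption.
  - intros F G H h1 h2 x hx; auto.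
Defined.

Definition Yposet {A : Poset} (U : (A -> Prop) -> Prop) : Poset.
Proof.
  refine (@Build_Poset (@Ycar A U)
            (fun I J => subset (proj1_sig I) (proj1_sig J)) _ _ _).
  - intros F x h; exact h.
  - intros F G h1 h2; apply sig_set_eq; assumption.
  - intros F G H h1 h2 x hx; auto.
Defined.

Lemma up_ok (A : Poset) (D : (A -> Prop) -> Prop) (a : A) :
  nonempty (up a) /\ fg_D_filter D (up a).
Proof.
  split. { exists a; apply le_refl. }
  exists (fun y => y = a); repeat split.
  - exists (a :: nil); intro x; simpl; split; [intros ->; auto | intros [->|[]]; auto].
  - intros x y hxy hx; unfold up in *; eapply le_trans; eauto.
  - intros S _ hS m [hlb hgl]; apply hgl; intros y hy; apply hS, hy.
  - intros x ->; apply le_refl.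
  - intros J [hJ _] hG x hx; apply (hJ a x hx), hG; reflexivity.
Qed.

Lemma down_ok (A : Poset) (U : (A -> Prop) -> Prop) (a : A) :
  nonempty (down a) /\ fg_U_ideal U (down a).
Proof.
  split. { exists a; apply le_refl. }
  exists (fun y => y = a); repeat split.
  - exists (a :: nil); intro x; simpl; split; [intros ->; auto | intros [->|[]]; auto].
  - intros x y hxy hy; unfold down in *; eapply le_trans; eauto.
  - intros S _ hS j [hub hlu]; apply hlu; intros y hy; apply hS, hy.
  - intros x ->; apply le_refl.
  - intros J [hJ _] hG x hx; apply (hJ x a hx), hG; reflexivity.
Qed.

Definition eX {A : Poset} (D : (A -> Prop) -> Prop) (a : A) : Xposet D :=
  exist _ (up a) (up_ok A D a).
Definition eY {A : Poset} (U : (A -> Prop) -> Prop) (a : A) : Yposet U :=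
  exist _ (down a) (down_ok A U a).

Record Stage (P : Poset) := {
  st_A : Poset;
  st_U : (st_A -> Prop) -> Prop;
  st_D : (st_A -> Prop) -> Prop;
  st_gamma : P -> st_A }.

Definition next_spec {A B : Poset} (gamma : A -> B) : (B -> Prop) -> Prop :=
  fun Z => nonempty Z /\ finite_set Z /\ subset Z (image gamma (fun _ => True)).

(* is_stage U D n S : S is (A_n, U_n, D_n, gamma_{0n}) for some run of the
   construction (i.e. for some choice of canonical amalgamations). *)
Inductive is_stage (P : Poset) (U D : (P -> Prop) -> Prop) : nat -> Stage P -> Prop :=
| stage0 : is_stage U D 0 (@Build_Stage P P U D (fun p => p))
| stageS : forall n (S : Stage P) (A : Poset)
             (piX : Xposet (st_D S) -> A) (piY : Yposet (st_U S) -> A),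
    is_stage U D n S ->
    canonical_amalgamation (eX (st_D S)) (eY (st_U S)) A piX piY ->
    is_stage U D (Datatypes.S n)
      (@Build_Stage P A
         (next_spec (fun a => piX (eX (st_D S) a)))
         (next_spec (fun a => piX (eX (st_D S) a)))
         (fun p => piX (eX (st_D S) (st_gamma S p)))).

(* tjoin a b l is the k-ary join symbol applied to a :: b :: l (k >= 2) *)
Inductive term (T : Type) : Type :=
| tleaf : T -> term T
| tjoin : term T -> term T -> list (term T) -> term T
| tmeet : term T -> term T -> list (term T) -> term T.

Arguments tleaf {T} _.
Arguments tjoin {T} _ _ _.
Arguments tmeet {T} _ _ _.

Fixpoint complexity {T : Type} (t : term T) : nat :=
  match t with
  | tleaf _ => 0
  | tjoin a b l | tmeet a b l =>
      S (Nat.max (complexity a) (Nat.max (complexity b) (list_max (map complexity l))))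
  end.

Fixpoint is_Tterm {Q : Type} (Tset : Q -> Prop) (t : term Q) : Prop :=
  match t with
  | tleaf x => Tset x
  | tjoin a b l | tmeet a b l =>
      is_Tterm Tset a /\ is_Tterm Tset b /\
      (fix go (l : list (term Q)) : Prop :=
         match l with nil => True | c :: l' => is_Tterm Tset c /\ go l' end) l
  end.

Fixpoint corr {Q : Poset} (t : term Q) (q : Q) : Prop :=
  match t with
  | tleaf x => q = x
  | tjoin a b l =>
      exists qa qb qs, corr a qa /\ corr b qb /\
        (fix go (l : list (term Q)) (qs : list Q) : Prop :=
           match l, qs with
           | nil, nil => True
           | c :: l', r :: qs' => corr c r /\ go l' qs'
           | _, _ => False end) l qs /\
        is_join (fun y => In y (qa :: qb :: qs)) q
  | tmeet a b l =>
      exists qa qb qs, corr a qa /\ corr b qb /\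
        (fix go (l : list (term Q)) (qs : list Q) : Prop :=
           match l, qs with
           | nil, nil => True
           | c :: l', r :: qs' => corr c r /\ go l' qs'
           | _, _ => False end) l qs /\
        is_meet (fun y => In y (qa :: qb :: qs)) q
  end.

Definition k_complete (Q : Poset) (Tset : Q -> Prop) (k : nat) : Prop :=
  forall k', k' < k -> forall t : term Q, is_Tterm Tset t -> complexity t = k' ->
    exists q, corr t q.

(* Main.v *)
Require Import Defs.
From Stdlib Require Import List PeanoNat Lia ClassicalEpsilon FunctionalExtensionality PropExtensionality.

Lemma choice_fun {X Y : Type} (R : X -> Y -> Prop) :
  (forall x, exists y, R x y) -> exists h, forall x, R x (h x).
Proof.
  intro H. exists (fun x => proj1_sig (constructive_indefinite_description _ (H x))).
  intro x. exact (proj2_sig (constructive_indefinite_description _ (H x))).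
Qed.

Lemma meet_unique {Q : Poset} (Z : Q -> Prop) m m' : is_meet Z m -> is_meet Z m' -> m = m'.
Proof. intros [h1 h2] [h1' h2']. apply le_antisym; auto. Qed.
Lemma join_unique {Q : Poset} (Z : Q -> Prop) m m' : is_join Z m -> is_join Z m' -> m = m'.
Proof. intros [h1 h2] [h1' h2']. apply le_antisym; auto. Qed.

Lemma meet_ext {Q : Poset} (Z Z' : Q -> Prop) m : (forall x, Z x <-> Z' x) -> is_meet Z m -> is_meet Z' m.
Proof. intros e [h1 h2]; split. intros y hy; apply h1, e, hy. intros x hx; apply h2; intros y hy; apply hx, e, hy. Qed.
Lemma join_ext {Q : Poset} (Z Z' : Q -> Prop) m : (forall x, Z x <-> Z' x) -> is_join Z m -> is_join Z' m.
Proof. intros e [h1 h2]; split. intros y hy; apply h1, e, hy. intros x hx; apply h2; intros y hy; apply hx, e, hy. Qed.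

Definition PropP : Poset.
Proof.
  refine (@Build_Poset Prop (fun p q => p -> q) _ _ _); auto.
  intros x y h1 h2; apply propositional_extensionality; tauto.
Defined.

Lemma image_cover {P X Y A : Poset} (eX0 : P -> X) (eY0 : P -> Y) (piX : X -> A) (piY : Y -> A) :
  canonical_amalgamation eX0 eY0 A piX piY ->
  forall a, (exists x, a = piX x) \/ (exists y, a = piY y).
Proof.
  intros (_ & hXe & _ & hYe & _ & hu) a0.
  pose (h := (fun b : A => le a0 b) : A -> PropP).
  destruct (hu PropP (fun x => h (piX x)) (fun y => h (piY y))) as [u [[hmono [hX hY]] huq]].
  - intros x x' hle H; simpl in *. unfold h in *. eapply le_trans; [exact H|]. apply hXe, hle.
  - intros y y' hle H; simpl in *. unfold h in *. eapply le_trans; [exact H|]. apply hYe, hle.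
  - intros x y hle H; simpl in *; unfold h in *; eapply le_trans; eauto.
  - assert (e1 : forall b, h b = u b).
    { apply huq; try (intro; reflexivity). intros b b' hle H; simpl in *; unfold h in *; eapply le_trans; eauto. }
    pose (u' := (fun b : A => exists z, ((exists x, z = piX x) \/ (exists y, z = piY y)) /\ le z b /\ le a0 z) : A -> PropP).
    assert (e2 : forall b, u' b = u b).
    { apply huq.
      - intros b b' hle [z [hz [h1 h2]]]; exists z; split; [exact hz|split; [eapply le_trans; eauto| exact h2]].
      - intro x; apply propositional_extensionality; unfold u', h; split.
        + intros [z [_ [h1 h2]]]; eapply le_trans; eauto.
        + intro H; exists (piX x); split; [left; eauto| split; [apply le_refl| exact H]].
      - intro x; apply propositional_extensionality; unfold u', h; split.
        + intros [z [_ [h1 h2]]]; eapply le_trans; eauto.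
        + intro H; exists (piY x); split; [right; eauto| split; [apply le_refl| exact H]]. }
    assert (hu0 : u' a0). { rewrite e2, <- e1. unfold h. apply le_refl. }
    destruct hu0 as [z [hz [h1 h2]]].
    assert (z = a0) by (apply le_antisym; auto). subst z.
    destruct hz as [[x ->]|[y ->]]; eauto.
Qed.
Fixpoint term_ind' {T : Type} (Pr : term T -> Prop)
  (hl : forall x, Pr (tleaf x))
  (hj : forall a b l, Pr a -> Pr b -> Forall Pr l -> Pr (tjoin a b l))
  (hm : forall a b l, Pr a -> Pr b -> Forall Pr l -> Pr (tmeet a b l))
  (t : term T) {struct t} : Pr t :=
  match t with
  | tleaf x => hl x
  | tjoin a b l => hj a b l (term_ind' Pr hl hj hm a) (term_ind' Pr hl hj hm b)
      ((fix go (l : list (term T)) : Forall Pr l :=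
          match l with nil => Forall_nil _ | c :: l' => Forall_cons _ (term_ind' Pr hl hj hm c) (go l') end) l)
  | tmeet a b l => hm a b l (term_ind' Pr hl hj hm a) (term_ind' Pr hl hj hm b)
      ((fix go (l : list (term T)) : Forall Pr l :=
          match l with nil => Forall_nil _ | c :: l' => Forall_cons _ (term_ind' Pr hl hj hm c) (go l') end) l)
  end.

Definition corrs {Q : Poset} : list (term Q) -> list Q -> Prop :=
  fix go (l : list (term Q)) (qs : list Q) {struct l} : Prop :=
  match l, qs with
  | nil, nil => True
  | c :: l', r :: qs' => corr c r /\ go l' qs'
  | _, _ => False end.
Definition Tterms {Q : Type} (Tset : Q -> Prop) : list (term Q) -> Prop :=
  fix go (l : list (term Q)) : Prop :=
  match l with nil => True | c :: l' => is_Tterm Tset c /\ go l' end.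

Lemma corrs_unique {Q : Poset} (l : list (term Q)) :
  Forall (fun t => forall q q', corr t q -> corr t q' -> q = q') l ->
  forall qs qs', corrs l qs -> corrs l qs' -> qs = qs'.
Proof.
  induction 1 as [|c l hc hl IH]; intros qs qs'; destruct qs as [|r qs], qs' as [|r' qs'];
    simpl; intros h h'; try contradiction; auto.
  destruct h, h'. f_equal; eauto.
Qed.

Lemma corr_unique {Q : Poset} (t : term Q) : forall q q', corr t q -> corr t q' -> q = q'.
Proof.
  induction t using term_ind'; simpl.
  - intros; subst; reflexivity.
  - intros q q' (qa & qb & qs & ha & hb & hl & hj) (qa' & qb' & qs' & ha' & hb' & hl' & hj').
    change (corrs l qs) in hl. change (corrs l qs') in hl'.
    assert (qa = qa') by eauto. assert (qb = qb') by eauto.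
    assert (qs = qs') by (eapply corrs_unique; eauto). subst. eapply join_unique; eauto.
  - intros q q' (qa & qb & qs & ha & hb & hl & hj) (qa' & qb' & qs' & ha' & hb' & hl' & hj').
    change (corrs l qs) in hl. change (corrs l qs') in hl'.
    assert (qa = qa') by eauto. assert (qb = qb') by eauto.
    assert (qs = qs') by (eapply corrs_unique; eauto). subst. eapply meet_unique; eauto.
Qed.

Lemma terms_exist {Q : Poset} (T : Q -> Prop) n (l : list Q) :
  (forall x, In x l -> exists t, is_Tterm T t /\ complexity t <= n /\ corr t x) ->
  exists ts, Tterms T ts /\ Forall (fun t => complexity t <= n) ts /\ corrs ts l.
Proof.
  induction l as [|x l IH]; intro h.
  - exists nil; simpl; split; [exact I| split; [constructor| exact I]].
  - destruct (h x (or_introl eq_refl)) as (t & h1 & h2 & h3).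
    destruct IH as (ts & g1 & g2 & g3). { intros y hy; apply h; right; exact hy. }
    exists (t :: ts); simpl; split; [auto| split; [constructor; auto| auto]].
Qed.

Lemma cplx_bound {T : Type} n (tx ty : term T) trest :
  Forall (fun t => complexity t <= n) (tx :: ty :: trest) ->
  Nat.max (complexity tx) (Nat.max (complexity ty) (list_max (map complexity trest))) <= n.
Proof.
  intro h. inversion h as [|? ? h1 h2]; subst. inversion h2 as [|? ? h3 h4]; subst.
  assert (list_max (map complexity trest) <= n).
  { apply list_max_le. apply Forall_map. exact h4. }
  apply Nat.max_lub; auto. apply Nat.max_lub; auto.
Qed.

Lemma list_meet {Q : Poset} (T : Q -> Prop) n (hc : k_complete Q T (S (S n))) (l : list Q) :
  l <> nil -> (forall x, In x l -> exists t, is_Tterm T t /\ complexity t <= n /\ corr t x) ->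
  exists q, is_meet (fun y => In y l) q /\ exists t, is_Tterm T t /\ complexity t <= S n /\ corr t q.
Proof.
  intros hne h.
  destruct (terms_exist T n l h) as (ts & g1 & g2 & g3).
  destruct l as [|x [|y rest]]; [congruence| |].
  - destruct ts as [|t [|t' ts]]; simpl in g3; try (exfalso; tauto).
    exists x; split.
    + split. intros z [<-|[]]; apply le_refl. intros w hw; apply hw; left; auto.
    + exists t. simpl in g1. inversion g2; subst. split; [tauto| split; [lia| tauto]].
  - destruct ts as [|tx [|ty trest]]; simpl in g3; try (exfalso; tauto).
    destruct g3 as (hx & hy & hrest).
    pose proof (cplx_bound n tx ty trest g2) as hb.
    assert (hT : is_Tterm T (tmeet tx ty trest)) by (simpl in g1 |- *; exact g1).
    destruct (hc (complexity (tmeet tx ty trest))) with (t := tmeet tx ty trest) as [q hq];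
      [simpl; lia| exact hT| reflexivity|].
    exists q. split.
    + pose proof hq as hq'. simpl in hq'. destruct hq' as (qa & qb & qs & ha & hb' & hl & hm).
      change (corrs trest qs) in hl.
      assert (qa = x) by (eapply corr_unique; eauto).
      assert (qb = y) by (eapply corr_unique; eauto).
      assert (qs = rest).
      { apply (corrs_unique trest); [| exact hl | exact hrest].
        apply Forall_forall. intros t _. apply corr_unique. }
      subst. exact hm.
    + exists (tmeet tx ty trest). split; [exact hT| split; [simpl; lia| exact hq]].
Qed.

Lemma list_join {Q : Poset} (T : Q -> Prop) n (hc : k_complete Q T (S (S n))) (l : list Q) :
  l <> nil -> (forall x, In x l -> exists t, is_Tterm T t /\ complexity t <= n /\ corr t x) ->
  exists q, is_join (fun y => In y l) q /\ exists t, is_Tterm T t /\ complexity t <= S n /\ corr t q.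
Proof.
  intros hne h.
  destruct (terms_exist T n l h) as (ts & g1 & g2 & g3).
  destruct l as [|x [|y rest]]; [congruence| |].
  - destruct ts as [|t [|t' ts]]; simpl in g3; try (exfalso; tauto).
    exists x; split.
    + split. intros z [<-|[]]; apply le_refl. intros w hw; apply hw; left; auto.
    + exists t. simpl in g1. inversion g2; subst. split; [tauto| split; [lia| tauto]].
  - destruct ts as [|tx [|ty trest]]; simpl in g3; try (exfalso; tauto).
    destruct g3 as (hx & hy & hrest).
    pose proof (cplx_bound n tx ty trest g2) as hb.
    assert (hT : is_Tterm T (tjoin tx ty trest)) by (simpl in g1 |- *; exact g1).
    destruct (hc (complexity (tjoin tx ty trest))) with (t := tjoin tx ty trest) as [q hq];
      [simpl; lia| exact hT| reflexivity|].
    exists q. split.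
    + pose proof hq as hq'. simpl in hq'. destruct hq' as (qa & qb & qs & ha & hb' & hl & hm).
      change (corrs trest qs) in hl.
      assert (qa = x) by (eapply corr_unique; eauto).
      assert (qb = y) by (eapply corr_unique; eauto).
      assert (qs = rest).
      { apply (corrs_unique trest); [| exact hl | exact hrest].
        apply Forall_forall. intros t _. apply corr_unique. }
      subst. exact hm.
    + exists (tjoin tx ty trest). split; [exact hT| split; [simpl; lia| exact hq]].
Qed.
Lemma Xle {A : Poset} (DA : (A -> Prop) -> Prop) (x y : Xposet DA) :
  le x y <-> subset (proj1_sig y) (proj1_sig x).
Proof. apply iff_refl. Qed.
Lemma Yle {A : Poset} (UA : (A -> Prop) -> Prop) (x y : Yposet UA) :
  le x y <-> subset (proj1_sig x) (proj1_sig y).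
Proof. apply iff_refl. Qed.

Lemma X_gen {A : Poset} (DA : (A -> Prop) -> Prop) (F : Xposet DA) :
  is_D_filter DA (proj1_sig F) /\ exists H : list A, H <> nil /\ (forall h, In h H -> proj1_sig F h) /\
    (forall J, is_D_filter DA J -> (forall h, In h H -> J h) -> subset (proj1_sig F) J).
Proof.
  destruct F as [Fs [[x0 hx0] (G & [l hl] & hfil & hsub & hleast)]]; simpl. split; auto.
  exists (x0 :: l). split; [discriminate|]. split.
  - intros h [<-|hh]; auto. apply hsub, hl, hh.
  - intros J hJ hH; apply hleast; auto. intros x hx; apply hH; right; apply hl, hx.
Qed.
Lemma Y_gen {A : Poset} (UA : (A -> Prop) -> Prop) (F : Yposet UA) :
  is_U_ideal UA (proj1_sig F) /\ exists H : list A, H <> nil /\ (forall h, In h H -> proj1_sig F h) /\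
    (forall J, is_U_ideal UA J -> (forall h, In h H -> J h) -> subset (proj1_sig F) J).
Proof.
  destruct F as [Fs [[x0 hx0] (G & [l hl] & hfil & hsub & hleast)]]; simpl. split; auto.
  exists (x0 :: l). split; [discriminate|]. split.
  - intros h [<-|hh]; auto. apply hsub, hl, hh.
  - intros J hJ hH; apply hleast; auto. intros x hx; apply hH; right; apply hl, hx.
Qed.

Lemma X_meet_gen {A : Poset} (DA : (A -> Prop) -> Prop) (x : Xposet DA) (H : list A) :
  (forall h, In h H -> proj1_sig x h) ->
  (forall J, is_D_filter DA J -> (forall h, In h H -> J h) -> subset (proj1_sig x) J) ->
  is_meet (image (eX DA) (fun a => In a H)) x.
Proof.
  intros hsub hleast. destruct (X_gen DA x) as [[hup _] _]. split.
  - intros y [a [ha <-]]. apply (proj2 (Xle _ _ _)); simpl. intros z hz. apply (hup a z hz), hsub, ha.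
  - intros z hz. apply (proj2 (Xle _ _ _)). apply hleast. apply (proj1 (X_gen DA z)).
    intros h hh. specialize (hz (eX DA h) (ex_intro _ h (conj hh eq_refl))).
    apply (proj1 (Xle _ _ _)) in hz; simpl in hz. apply hz. apply le_refl.
Qed.
Lemma Y_join_gen {A : Poset} (UA : (A -> Prop) -> Prop) (y : Yposet UA) (H : list A) :
  (forall h, In h H -> proj1_sig y h) ->
  (forall J, is_U_ideal UA J -> (forall h, In h H -> J h) -> subset (proj1_sig y) J) ->
  is_join (image (eY UA) (fun a => In a H)) y.
Proof.
  intros hsub hleast. destruct (Y_gen UA y) as [[hdown _] _]. split.
  - intros z [a [ha <-]]. apply (proj2 (Yle _ _ _)); simpl. intros w hw. apply (hdown w a hw), hsub, ha.
  - intros z hz. apply (proj2 (Yle _ _ _)). apply hleast. apply (proj1 (Y_gen UA z)).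
    intros h hh. specialize (hz (eY UA h) (ex_intro _ h (conj hh eq_refl))).
    apply (proj1 (Yle _ _ _)) in hz; simpl in hz. apply hz. apply le_refl.
Qed.

Lemma eX_meet {A : Poset} (DA : (A -> Prop) -> Prop) (Z : A -> Prop) j :
  DA Z -> is_meet Z j -> is_meet (image (eX DA) Z) (eX DA j).
Proof.
  intros hZ [hlb hgl]. split.
  - intros y [s [hs <-]]. apply (proj2 (Xle _ _ _)); simpl. intros z hz. unfold up in *.
    eapply le_trans; [apply hlb, hs| exact hz].
  - intros x hx. apply (proj2 (Xle _ _ _)); simpl. destruct (X_gen DA x) as [[hup hcl] _].
    intros z hz. unfold up in hz. apply (hup j z hz). apply (hcl Z hZ); [|split; auto].
    intros s hs. specialize (hx _ (ex_intro _ s (conj hs eq_refl))).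
    apply (proj1 (Xle _ _ _)) in hx; simpl in hx. apply hx, le_refl.
Qed.
Lemma eY_join {A : Poset} (UA : (A -> Prop) -> Prop) (Z : A -> Prop) j :
  UA Z -> is_join Z j -> is_join (image (eY UA) Z) (eY UA j).
Proof.
  intros hZ [hub hlu]. split.
  - intros y [s [hs <-]]. apply (proj2 (Yle _ _ _)); simpl. intros z hz. unfold down in *.
    eapply le_trans; [exact hz| apply hub, hs].
  - intros x hx. apply (proj2 (Yle _ _ _)); simpl. destruct (Y_gen UA x) as [[hdown hcl] _].
    intros z hz. unfold down in hz. apply (hdown z j hz). apply (hcl Z hZ); [|split; auto].
    intros s hs. specialize (hx _ (ex_intro _ s (conj hs eq_refl))).
    apply (proj1 (Yle _ _ _)) in hx; simpl in hx. apply hx, le_refl.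
Qed.

Lemma filter_image {A Q : Poset} (DA : (A -> Prop) -> Prop) (h : A -> Q) (hmono : order_preserving h)
  (hpres : forall Z, DA Z -> forall m, is_meet Z m -> is_meet (image h Z) (h m))
  (F : A -> Prop) (H : list A) (hsub : forall a, In a H -> F a)
  (hleast : forall J, is_D_filter DA J -> (forall a, In a H -> J a) -> subset F J) m :
  is_meet (image h F) m <-> is_meet (image h (fun a => In a H)) m.
Proof.
  assert (filt : forall x, (forall a, In a H -> le x (h a)) -> forall a, F a -> le x (h a)).
  { intros x hx. apply hleast. split.
    - intros u v huv hu. eapply le_trans; [exact hu| apply hmono, huv].
    - intros Z hZ hZJ m' hm'. apply (proj2 (hpres Z hZ m' hm')).
      intros y' [s [hs <-]]. apply hZJ, hs.
    - exact hx. }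
  split.
  - intros [hlb hgl]. split.
    + intros y [a [ha <-]]. apply hlb. exists a; auto.
    + intros x hx. apply hgl. intros y [a [ha <-]]. apply (filt x); auto.
      intros b hb; apply hx; exists b; auto.
  - intros [hlb hgl]. split.
    + intros y [a [ha <-]]. apply (filt m); auto. intros b hb; apply hlb; exists b; auto.
    + intros x hx. apply hgl. intros y [a [ha <-]]. apply hx. exists a; split; auto.
Qed.

Lemma ideal_image {A Q : Poset} (UA : (A -> Prop) -> Prop) (h : A -> Q) (hmono : order_preserving h)
  (hpres : forall Z, UA Z -> forall m, is_join Z m -> is_join (image h Z) (h m))
  (F : A -> Prop) (H : list A) (hsub : forall a, In a H -> F a)
  (hleast : forall J, is_U_ideal UA J -> (forall a, In a H -> J a) -> subset F J) m :
  is_join (image h F) m <-> is_join (image h (fun a => In a H)) m.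
Proof.
  assert (filt : forall x, (forall a, In a H -> le (h a) x) -> forall a, F a -> le (h a) x).
  { intros x hx. apply hleast. split.
    - intros u v huv hu. eapply le_trans; [apply hmono, huv| exact hu].
    - intros Z hZ hZJ m' hm'. apply (proj2 (hpres Z hZ m' hm')).
      intros y' [s [hs <-]]. apply hZJ, hs.
    - exact hx. }
  split.
  - intros [hlb hgl]. split.
    + intros y [a [ha <-]]. apply hlb. exists a; auto.
    + intros x hx. apply hgl. intros y [a [ha <-]]. apply (filt x); auto.
      intros b hb; apply hx; exists b; auto.
  - intros [hlb hgl]. split.
    + intros y [a [ha <-]]. apply (filt m); auto. intros b hb; apply hlb; exists b; auto.
    + intros x hx. apply hgl. intros y [a [ha <-]]. apply hx. exists a; split; auto.
Qed.

Lemma next_spec_image {A B : Poset} (gn : A -> B) (Z : A -> Prop) :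
  nonempty Z -> finite_set Z -> next_spec gn (image gn Z).
Proof.
  intros [s hs] [l hl]. split; [exists (gn s), s; auto|split].
  - exists (map gn l). intro z; rewrite in_map_iff. split.
    + intros (a & h1 & h2). exists a; split; auto. apply hl, h1.
    + intros (a & h1 & h2). exists a; split; auto. apply hl, h2.
  - intros z (a & _ & <-); exists a; split; auto.
Qed.

Lemma preimage_list {A B : Type} (g : A -> B) (l : list B) :
  (forall z, In z l -> exists a, g a = z) -> exists H, forall z, In z l <-> exists a, In a H /\ g a = z.
Proof.
  induction l as [|z l IH]; intro h.
  - exists nil. intro z; simpl; split; [tauto| intros (a & [] & _)].
  - destruct (h z (or_introl eq_refl)) as [a ha].
    destruct IH as [H hH]. { intros w hw; apply h; right; exact hw. }
    exists (a :: H). intro w; simpl; rewrite hH. split.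
    + intros [<-|(b & hb & <-)]; [exists a; auto| exists b; auto].
    + intros (b & [<-|hb] & <-); [left; auto| right; exists b; auto].
Qed.

Lemma map_image {A Q : Type} (h : A -> Q) (H : list A) y :
  In y (map h H) <-> image h (fun a => In a H) y.
Proof.
  rewrite in_map_iff. split; intros (a & h1 & h2); exists a; split; auto.
Qed.

Definition weakUD {A B : Poset} (UA DA : (A -> Prop) -> Prop) (g : A -> B) :=
  order_preserving g /\
  (forall Z, UA Z -> nonempty Z -> forall j, is_join Z j -> is_join (image g Z) (g j)) /\
  (forall Z, DA Z -> nonempty Z -> forall m, is_meet Z m -> is_meet (image g Z) (g m)).
Lemma step {P Q : Poset} (T : Q -> Prop) (n : nat) (f : P -> Q) (A : Poset)
  (UA DA : (A -> Prop) -> Prop) (gam : P -> A) (fn : A -> Q)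
  (hfU : forall Z, UA Z -> finite_set Z) (hfD : forall Z, DA Z -> finite_set Z)
  (hfn : UD_morphism UA DA fn) (hcomp : forall p, fn (gam p) = f p)
  (hterm : forall a, exists t, is_Tterm T t /\ complexity t <= n /\ corr t (fn a))
  (huniq : forall g, weakUD UA DA g -> (forall p, g (gam p) = f p) -> forall a, g a = fn a)
  (B : Poset) (piX : Xposet DA -> B) (piY : Yposet UA -> B)
  (hca : canonical_amalgamation (eX DA) (eY UA) B piX piY)
  (hc : k_complete Q T (S (S n))) :
  exists fs : B -> Q,
    UD_morphism (next_spec (fun a => piX (eX DA a))) (next_spec (fun a => piX (eX DA a))) fs /\
    (forall p, fs (piX (eX DA (gam p))) = f p) /\
    (forall b, exists t, is_Tterm T t /\ complexity t <= S n /\ corr t (fs b)) /\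
    (forall g, weakUD (next_spec (fun a => piX (eX DA a))) (next_spec (fun a => piX (eX DA a))) g ->
       (forall p, g (piX (eX DA (gam p))) = f p) -> forall b, g b = fs b).
Proof.
  pose proof hca as (hXm & hXe & hYj & hYe & hXY & hUniv).
  destruct hfn as (fmono & fjoin & fmeet).
  assert (hXex : forall x : Xposet DA, exists m, is_meet (image fn (proj1_sig x)) m /\
            exists t, is_Tterm T t /\ complexity t <= S n /\ corr t m).
  { intros x. destruct (X_gen DA x) as [hfil (H & hne & hsub & hleast)].
    destruct (list_meet T n hc (map fn H)) as (m & hm & ht).
    - destruct H; [congruence| discriminate].
    - intros y hy. apply in_map_iff in hy as (a & <- & _). apply hterm.
    - exists m; split; auto. apply (filter_image DA fn fmono fmeet _ H hsub hleast).
      eapply meet_ext; [|exact hm]. apply map_image. }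
  assert (hYex : forall y : Yposet UA, exists m, is_join (image fn (proj1_sig y)) m /\
            exists t, is_Tterm T t /\ complexity t <= S n /\ corr t m).
  { intros y. destruct (Y_gen UA y) as [hfil (H & hne & hsub & hleast)].
    destruct (list_join T n hc (map fn H)) as (m & hm & ht).
    - destruct H; [congruence| discriminate].
    - intros z hz. apply in_map_iff in hz as (a & <- & _). apply hterm.
    - exists m; split; auto. apply (ideal_image UA fn fmono fjoin _ H hsub hleast).
      eapply join_ext; [|exact hm]. apply map_image. }
  destruct (choice_fun _ hXex) as [FX hFX]. destruct (choice_fun _ hYex) as [GY hGY].
  assert (FXmono : order_preserving FX).
  { intros x x' hle. apply (proj1 (Xle _ _ _)) in hle.
    destruct (hFX x) as [[hlb _] _]. destruct (hFX x') as [[_ hgl] _].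
    apply hgl. intros y (a & ha & <-). apply hlb. exists a; split; auto. }
  assert (GYmono : order_preserving GY).
  { intros y y' hle. apply (proj1 (Yle _ _ _)) in hle.
    destruct (hGY y) as [[_ hgl] _]. destruct (hGY y') as [[hub _] _].
    apply hgl. intros z (a & ha & <-). apply hub. exists a; split; auto. }
  assert (compat : forall x y, le (piY y) (piX x) -> le (GY y) (FX x)).
  { intros x y hle.
    assert (key : forall p q, proj1_sig y p -> proj1_sig x q -> le p q).
    { intros p q hp hq.
      destruct (Y_gen UA y) as [[ydown _] _]. destruct (X_gen DA x) as [[xup _] _].
      assert (h1 : le (eY UA p) y). { apply (proj2 (Yle _ _ _)); simpl. intros z hz. apply (ydown z p hz hp). }
      assert (h2 : le x (eX DA q)). { apply (proj2 (Xle _ _ _)); simpl. intros z hz. apply (xup q z hz hq). }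
      apply (proj1 (hYe _ _)) in h1. apply (proj1 (hXe _ _)) in h2.
      assert (h3 : le (piX (eX DA p)) (piX (eX DA q))).
      { rewrite (hXY p). eapply le_trans; [exact h1|]. eapply le_trans; [exact hle| exact h2]. }
      apply (proj2 (hXe _ _)) in h3. apply (proj1 (Xle _ _ _)) in h3. simpl in h3.
      apply h3. apply le_refl. }
    destruct (hGY y) as [[_ hgl] _]. apply hgl. intros z (p & hp & <-).
    destruct (hFX x) as [[_ hgl'] _]. apply hgl'. intros w (q & hq & <-). apply fmono, key; auto. }
  destruct (hUniv Q FX GY FXmono GYmono compat) as (u & (umono & uX & uY) & uuniq).
  assert (ugn : forall a, u (piX (eX DA a)) = fn a).
  { intro a. rewrite uX. destruct (hFX (eX DA a)) as [hm _]. eapply meet_unique; [exact hm|].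
    simpl. split.
    - intros y (b & hb & <-). apply fmono, hb.
    - intros w hw. apply hw. exists a; split; [apply le_refl| reflexivity]. }
  exists u. split; [|split; [|split]].
  - split; [exact umono| split].
    + intros Z (hne & [l hl] & hsubim) j hj.
      destruct (preimage_list (fun a => piX (eX DA a)) l) as [H hH].
      { intros z hz. apply hl, hsubim in hz. destruct hz as (a & _ & ha). exists a; exact ha. }
      assert (hZ : forall z, Z z <-> exists a, In a H /\ piX (eX DA a) = z).
      { intro z. rewrite hl. apply hH. }
      assert (hne' : exists a0, In a0 H).
      { destruct hne as [z hz]. apply hZ in hz. destruct hz as (a & ha & _). exists a; exact ha. }
      pose (I := fun a => forall J, is_U_ideal UA J -> (forall h, In h H -> J h) -> J a).
      assert (hI : nonempty I /\ fg_U_ideal UA I).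
      { split.
        - destruct hne' as [a0 ha0]. exists a0. intros J _ hJ; auto.
        - exists (fun a => In a H). split; [exists H; intro; apply iff_refl|]. split; [split|split].
          + intros x y hxy hy J hJ hHJ. apply (proj1 hJ x y hxy), hy; auto.
          + intros Z' hZ' hsub j' hj' J hJ hHJ. apply (proj2 hJ Z' hZ'); auto.
            intros s hs; apply hsub; auto.
          + intros a ha J _ hHJ; auto.
          + intros J hJ hG a ha; apply ha; auto. }
      pose (y := exist _ I hI : Yposet UA).
      assert (hyj : is_join (image (eY UA) (fun a => In a H)) y).
      { apply Y_join_gen; simpl.
        - intros h hh J _ hHJ; auto.
        - intros J hJ hHJ a ha; apply ha; auto. }
      pose proof (hYj _ _ hyj) as hpj.
      assert (j = piY y).
      { eapply join_unique; [exact hj|]. eapply join_ext; [|exact hpj]. intro z; rewrite hZ. split.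
        - intros (w & (a & ha & <-) & <-). exists a; split; auto.
        - intros (a & ha & <-). exists (eY UA a); split; [exists a; auto| symmetry; apply hXY]. }
      subst j. rewrite uY.
      destruct (hGY y) as [hgj _]. simpl in hgj.
      apply (ideal_image UA fn fmono fjoin I H) in hgj.
      * eapply join_ext; [|exact hgj]. intro z. split.
        -- intros (a & ha & <-). exists (piX (eX DA a)). split; [apply hZ; exists a; auto| apply ugn].
        -- intros (s & hs & <-). apply hZ in hs. destruct hs as (a & ha & <-). exists a; split; auto.
      * intros h hh J _ hHJ; auto.
      * intros J hJ hHJ a ha; apply ha; auto.
    + intros Z (hne & [l hl] & hsubim) j hj.
      destruct (preimage_list (fun a => piX (eX DA a)) l) as [H hH].
      { intros z hz. apply hl, hsubim in hz. destruct hz as (a & _ & ha). exists a; exact ha. }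
      assert (hZ : forall z, Z z <-> exists a, In a H /\ piX (eX DA a) = z).
      { intro z. rewrite hl. apply hH. }
      assert (hne' : exists a0, In a0 H).
      { destruct hne as [z hz]. apply hZ in hz. destruct hz as (a & ha & _). exists a; exact ha. }
      pose (I := fun a => forall J, is_D_filter DA J -> (forall h, In h H -> J h) -> J a).
      assert (hI : nonempty I /\ fg_D_filter DA I).
      { split.
        - destruct hne' as [a0 ha0]. exists a0. intros J _ hJ; auto.
        - exists (fun a => In a H). split; [exists H; intro; apply iff_refl|]. split; [split|split].
          + intros x y hxy hy J hJ hHJ. apply (proj1 hJ x y hxy), hy; auto.
          + intros Z' hZ' hsub j' hj' J hJ hHJ. apply (proj2 hJ Z' hZ'); auto.
            intros s hs; apply hsub; auto.
          + intros a ha J _ hHJ; auto.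
          + intros J hJ hG a ha; apply ha; auto. }
      pose (y := exist _ I hI : Xposet DA).
      assert (hyj : is_meet (image (eX DA) (fun a => In a H)) y).
      { apply X_meet_gen; simpl.
        - intros h hh J _ hHJ; auto.
        - intros J hJ hHJ a ha; apply ha; auto. }
      pose proof (hXm _ _ hyj) as hpj.
      assert (j = piX y).
      { eapply meet_unique; [exact hj|]. eapply meet_ext; [|exact hpj]. intro z; rewrite hZ. split.
        - intros (w & (a & ha & <-) & <-). exists a; split; auto.
        - intros (a & ha & <-). exists (eX DA a); split; [exists a; auto| reflexivity]. }
      subst j. rewrite uX.
      destruct (hFX y) as [hgj _]. simpl in hgj.
      apply (filter_image DA fn fmono fmeet I H) in hgj.
      * eapply meet_ext; [|exact hgj]. intro z. split.
        -- intros (a & ha & <-). exists (piX (eX DA a)). split; [apply hZ; exists a; auto| apply ugn].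
        -- intros (s & hs & <-). apply hZ in hs. destruct hs as (a & ha & <-). exists a; split; auto.
      * intros h hh J _ hHJ; auto.
      * intros J hJ hHJ a ha; apply ha; auto.
  - intro p. rewrite ugn. apply hcomp.
  - intro b. destruct (image_cover _ _ _ _ hca b) as [(x & ->)|(y & ->)].
    + rewrite uX. destruct (hFX x) as [_ ht]; exact ht.
    + rewrite uY. destruct (hGY y) as [_ ht]; exact ht.
  - intros g (gmono & gjoin & gmeet) hg b.
    assert (hg' : forall a, g (piX (eX DA a)) = fn a).
    { apply (huniq (fun a => g (piX (eX DA a)))); [| exact hg]. split; [|split].
      - intros a a' haa. apply gmono. apply (proj1 (hXe _ _)). apply (proj2 (Xle _ _ _)); simpl.
        intros z hz; unfold up in *; eapply le_trans; eauto.
      - intros Z hZ hne j hj.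
        pose proof (hYj _ _ (eY_join UA Z j hZ hj)) as h1.
        pose proof (next_spec_image (fun a => piX (eX DA a)) Z hne (hfU Z hZ)) as hZ'.
        assert (h2 : is_join (image (fun a => piX (eX DA a)) Z) (piX (eX DA j))).
        { rewrite hXY. eapply join_ext; [|exact h1]. intro z; split.
          - intros (w & (a & ha & <-) & <-). exists a; split; auto.
          - intros (a & ha & <-). exists (eY UA a); split; [exists a; auto| symmetry; apply hXY]. }
        pose proof (gjoin _ hZ' (proj1 hZ') _ h2) as h3.
        eapply join_ext; [|exact h3]. intro z; split.
        + intros (w & (a & ha & <-) & <-). exists a; split; auto.
        + intros (a & ha & <-). exists (piX (eX DA a)); split; [exists a; auto| reflexivity].
      - intros Z hZ hne j hj.
        pose proof (hXm _ _ (eX_meet DA Z j hZ hj)) as h1.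
        pose proof (next_spec_image (fun a => piX (eX DA a)) Z hne (hfD Z hZ)) as hZ'.
        assert (h2 : is_meet (image (fun a => piX (eX DA a)) Z) (piX (eX DA j))).
        { eapply meet_ext; [|exact h1]. intro z; split.
          - intros (w & (a & ha & <-) & <-). exists a; split; auto.
          - intros (a & ha & <-). exists (eX DA a); split; [exists a; auto| reflexivity]. }
        pose proof (gmeet _ hZ' (proj1 hZ') _ h2) as h3.
        eapply meet_ext; [|exact h3]. intro z; split.
        + intros (w & (a & ha & <-) & <-). exists a; split; auto.
        + intros (a & ha & <-). exists (piX (eX DA a)); split; [exists a; auto| reflexivity]. }
    apply (uuniq g gmono).
    + intros x. destruct (X_gen DA x) as [_ (H & hne & hsub & hleast)].
      pose proof (hXm _ _ (X_meet_gen DA x H hsub hleast)) as h1.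
      assert (hne' : nonempty (fun a => In a H)) by (destruct H as [|a H]; [congruence| exists a; left; auto]).
      pose proof (next_spec_image (fun a => piX (eX DA a)) _ hne' (ex_intro _ H (fun a => iff_refl _))) as hZ'.
      assert (h2 : is_meet (image (fun a => piX (eX DA a)) (fun a => In a H)) (piX x)).
      { eapply meet_ext; [|exact h1]. intro z; split.
        - intros (w & (a & ha & <-) & <-). exists a; split; auto.
        - intros (a & ha & <-). exists (eX DA a); split; [exists a; auto| reflexivity]. }
      pose proof (gmeet _ hZ' (proj1 hZ') _ h2) as h3.
      destruct (hFX x) as [hm _].
      apply (filter_image DA fn fmono fmeet _ H hsub hleast) in hm.
      eapply meet_unique; [|exact hm]. eapply meet_ext; [|exact h3]. intro z; split.
      * intros (w & (a & ha & <-) & <-). exists a; split; auto.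
      * intros (a & ha & <-). exists (piX (eX DA a)); split; [exists a; auto| apply hg'].
    + intros y. destruct (Y_gen UA y) as [_ (H & hne & hsub & hleast)].
      pose proof (hYj _ _ (Y_join_gen UA y H hsub hleast)) as h1.
      assert (hne' : nonempty (fun a => In a H)) by (destruct H as [|a H]; [congruence| exists a; left; auto]).
      pose proof (next_spec_image (fun a => piX (eX DA a)) _ hne' (ex_intro _ H (fun a => iff_refl _))) as hZ'.
      assert (h2 : is_join (image (fun a => piX (eX DA a)) (fun a => In a H)) (piY y)).
      { eapply join_ext; [|exact h1]. intro z; split.
        - intros (w & (a & ha & <-) & <-). exists a; split; auto; apply hXY.
        - intros (a & ha & <-). exists (eY UA a); split; [exists a; auto| symmetry; apply hXY]. }
      pose proof (gjoin _ hZ' (proj1 hZ') _ h2) as h3.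
      destruct (hGY y) as [hm _].
      apply (ideal_image UA fn fmono fjoin _ H hsub hleast) in hm.
      eapply join_unique; [|exact hm]. eapply join_ext; [|exact h3]. intro z; split.
      * intros (w & (a & ha & <-) & <-). exists a; split; auto.
      * intros (a & ha & <-). exists (piX (eX DA a)); split; [exists a; auto| apply hg'].
Qed.
Lemma main_ind (P Q : Poset) (U D : (P -> Prop) -> Prop)
  (hUr : radius_omega U) (hDr : radius_omega D) (f : P -> Q) (hf : UD_morphism U D f) :
  forall n St, is_stage U D n St -> k_complete Q (image f (fun _ => True)) (Datatypes.S n) ->
  (forall Z, st_U St Z -> finite_set Z) /\ (forall Z, st_D St Z -> finite_set Z) /\
  exists fs : st_A St -> Q, UD_morphism (st_U St) (st_D St) fs /\
    (forall p, fs (st_gamma St p) = f p) /\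
    (forall a, exists t, is_Tterm (image f (fun _ => True)) t /\ complexity t <= n /\ corr t (fs a)) /\
    (forall g, weakUD (st_U St) (st_D St) g -> (forall p, g (st_gamma St p) = f p) -> forall a, g a = fs a).
Proof.
  induction 1 as [|n St A piX piY hSt IH hca]; intro hc.
  - simpl. split; [exact hUr| split; [exact hDr|]]. exists f.
    split; [exact hf| split; [intro p; reflexivity| split]].
    + intros a; exists (tleaf (f a)); simpl. split; [exists a; split; auto| split; auto].
    + intros g _ hg a; exact (hg a).
  - destruct IH as (hfU & hfD & fn & hfn & hcomp & hterm & huniq).
    { intros k hk; apply hc; lia. }
    simpl. split; [intros Z hZ; exact (proj1 (proj2 hZ))| split; [intros Z hZ; exact (proj1 (proj2 hZ))|]].
    exact (step _ n f _ _ _ _ fn hfU hfD hfn hcomp hterm huniq A piX piY hca hc).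
Qed.

Theorem theorem10p8 (P Q : Poset) (U D : (P -> Prop) -> Prop)
  (hU : join_specification U) (hD : meet_specification D)
  (hUr : radius_omega U) (hDr : radius_omega D)
  (n : nat) (St : Stage P) (hS : is_stage U D n St)
  (f : P -> Q) (hf : UD_morphism U D f)
  (hc : k_complete Q (image f (fun _ => True)) (Datatypes.S n)) :
  exists fs : st_A St -> Q,
    (UD_morphism (st_U St) (st_D St) fs /\ (forall p, fs (st_gamma St p) = f p)) /\
    forall g : st_A St -> Q,
      UD_morphism (st_U St) (st_D St) g -> (forall p, g (st_gamma St p) = f p) ->
      forall a, g a = fs a.
Proof.
  destruct (main_ind P Q U D hUr hDr f hf n St hS hc) as (_ & _ & fs & h1 & h2 & _ & h4).
  exists fs. split; [split; assumption|]. intros g hg hgp. apply h4; auto.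
  destruct hg as (a & b & c). split; [exact a| split; intros; auto].
Qed.
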